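(* Let $n\ge5$, let $\Delta$ be a non-singular $(d-1)$-complex on $[n-1]$ and $\Delta'$ a singular $(d-1)$-complex on $[n-1]$. Then there are no nonnegative integers $m_I$ with $D_\Delta=D_{\Delta'}+\sum_I m_IE_I$ in $\operatorname{Pic}(\overline{\mathcal M}_{0,n})$.
   Context: $\operatorname{Pic}(\overline{\mathcal M}_{0,n})=\mathbb ZH\oplus\bigoplus_I\mathbb ZE_I$ (sum over $I\subseteq[n-1]$, $1\le|I|\le n-4$) via a fixed Kapranov blow-up presentation $\overline{\mathcal M}_{0,n}\cong\operatorname{Bl}\mathbb P^{n-3}$. A $k$-simplex on $[n-1]$ is a multiset of cardinality $k+1$ with entries in $[n-1]$; a $k$-complex is a finite set of distinct $k$-simplices; a simplex is singular if some entry has multiplicity $\ge2$; a complex is singular if it contains a singular simplex, non-singular otherwise. For a $(d-1)$-complex $\Delta$, $D_\Delta=dH-\sum_I\big(d-\max_{\sigma\in\Delta}\sum_{i\in I}\operatorname{mult}_i(\sigma)\big)E_I$. *)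

(* Defs.v *)
From HB Require Import structures.
From mathcomp Require Import all_boot all_order all_algebra.
Set Implicit Arguments. Unset Strict Implicit. Unset Printing Implicit Defensive.
Import Order.TTheory GRing.Theory Num.Theory.

(* The ground set [n-1] = {1,...,n-1} is modelled by 'I_(n.-1) = {0,...,n-2}
   (relabelling i |-> i+1). *)

(* A multiset on [N] is given by its multiplicity function. *)
Definition simplex (N : nat) := {ffun 'I_N -> nat}.
Definition mult (N : nat) (i : 'I_N) (s : simplex N) : nat := s i.
Definition card_ms (N : nat) (s : simplex N) : nat := \sum_(i : 'I_N) mult i s.

(* A k-simplex is a multiset of cardinality k+1; a (d-1)-simplex has cardinality d. *)
Definition is_simplex (N k : nat) (s : simplex N) : bool := card_ms s == k.+1.

Definition is_complex (N d : nat) (D : seq (simplex N)) : bool :=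
  uniq D && all (fun s => card_ms s == d) D.

Definition singular_simplex (N : nat) (s : simplex N) : bool :=
  [exists i : 'I_N, 2 <= mult i s].
Definition singular_complex (N : nat) (D : seq (simplex N)) : bool :=
  has (@singular_simplex N) D.

Definition valid_index (n : nat) (I : {set 'I_n.-1}) : bool :=
  (1 <= #|I|) && (#|I| <= n - 4).

(* Pic(M_{0,n}bar) = Z H (+) (+)_I Z E_I : an element is given by its coordinates;
   only the coordinates at valid I are meaningful. *)
Record pic (n : nat) := Pic { coefH : int; coefE : {set 'I_n.-1} -> int }.

Definition pic_eq (n : nat) (x y : pic n) : Prop :=
  coefH x = coefH y /\ forall I : {set 'I_n.-1}, valid_index I -> coefE x I = coefE y I.

Definition pic_add (n : nat) (x y : pic n) : pic n :=
  @Pic n (coefH x + coefH y)%R (fun I => coefE x I + coefE y I)%R.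

Definition sumE (n : nat) (m : {set 'I_n.-1} -> int) : pic n := @Pic n 0%R m.

Definition maxmult (N : nat) (D : seq (simplex N)) (I : {set 'I_N}) : nat :=
  \max_(s <- D) \sum_(i in I) mult i s.

Definition divisor (n d : nat) (D : seq (simplex n.-1)) : pic n :=
  @Pic n (d%:Z) (fun I => - (d%:Z - (maxmult D I)%:Z))%R.

(* Main.v *)
Require Import Defs.
From HB Require Import structures.
From mathcomp Require Import all_boot all_order all_algebra.
From mathcomp Require Import zify.
Import Order.TTheory GRing.Theory Num.Theory.

Theorem mainTheorem4 (n d : nat) (D D' : seq (simplex n.-1)) :
  5 <= n ->
  is_complex d D -> ~~ singular_complex D ->
  is_complex d D' -> singular_complex D' ->
  ~ (exists m : {set 'I_n.-1} -> int,
       (forall I, valid_index I -> (0 <= m I)%R) /\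
       pic_eq (divisor d D) (pic_add (divisor d D') (sumE m))).
Proof.
move=> n5 _ nsD _ /hasP [s' s'D' /existsP [i Hi]] [m [Hm [_ HE]]].
have vI : valid_index [set i] by rewrite /valid_index cards1; apply/andP; split => //; lia.
have := HE _ vI; have := Hm _ vI.
rewrite /= /maxmult.
have le1 : \max_(s <- D) \sum_(j in [set i]) mult j s <= 1.
  apply/bigmax_leqP_seq => s sD _; rewrite big_set1.
  case: leqP => // H; case/negP: nsD; apply/hasP; exists s => //.
  by apply/existsP; exists i.
have ge2 : 2 <= \max_(s <- D') \sum_(j in [set i]) mult j s.
  apply: (leq_trans _ (@leq_bigmax_seq _ D' xpredT (fun s => \sum_(j in [set i]) mult j s) s' s'D' isT)).
  by rewrite big_set1.
move: le1 ge2.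
set a := \max_(s <- D) _; set b := \max_(s <- D') _.
move=> ? ? ? ?; lia.
Qed.
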